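(* Let $\mathcal G$ be locally $\mathrm d$-finite and let $\mathcal L:\mathbb R^V\supset\mathrm{Dom}(\mathcal L)\to\mathbb R^V$ be a linear operator with $\mathcal C_{\mathrm{fs}}(\mathcal G)\subset\mathrm{Dom}(\mathcal L)$ that is bounded with respect to the sup-norm, semi-local, and a rough differential operator. Then ${}^{\mathcal O}\mathrm{Ric}_{\mathcal L}(x,y)$ is finite for all distinct $x,y\in V$.
   Context: $\mathcal G$ is a locally finite graph with vertex set $V$ and a distance $\mathrm d$ on $V$ with $(V,\mathrm d)$ complete; locally $\mathrm d$-finite means every $\mathrm d$-metric ball is a finite set. $\mathcal C_{\mathrm{fs}}(\mathcal G)$ = finitely supported functions; $\mathrm{Lip}(1)$ = functions with $|f(u)-f(v)|\le\mathrm d(u,v)$; $\nabla_{xy}f=(f(y)-f(x))/\mathrm d(x,y)$; ${}^{\mathcal O}\mathrm{Ric}_{\mathcal L}(x,y):=\inf\{\nabla_{yx}\mathcal Lf:\ f\in\mathcal C_{\mathrm{fs}}\cap\mathrm{Lip}(1),\ \nabla_{xy}f=1\}$. Bounded: there is $B>0$ with $\sup|\mathcal Lf|\le B\sup|f|$ for all $f\in\mathcal C_{\mathrm{fs}}$. Semi-local: there exist $R>0$ and $C_2>0$ such that for all $x$ and all $f\in\mathrm{Dom}(\mathcal L)\cap\mathrm{Lip}(1)$, $f|_{\mathcal B_R(x)}=0$ implies $\mathcal Lf(x)=0$, and $|\mathcal B_{2R}(x)|\le C_2$ for all $x$ ($\mathcal B_r(x)$ the $\mathrm d$-ball). Rough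 differential operator: $\mathcal L1=0$. *)

(* Defs.v *)
From Stdlib Require Import Reals List.
From Coquelicot Require Import Coquelicot.
Open Scope R_scope.

Definition is_metric {V : Type} (d : V -> V -> R) : Prop :=
  (forall x y, 0 <= d x y) /\
  (forall x y, d x y = 0 <-> x = y) /\
  (forall x y, d x y = d y x) /\
  (forall x y z, d x z <= d x y + d y z).

Definition metric_complete {V : Type} (d : V -> V -> R) : Prop :=
  forall u : nat -> V,
    (forall eps, 0 < eps -> exists N, forall m n, (N <= m)%nat -> (N <= n)%nat ->
        d (u m) (u n) < eps) ->
    exists l, forall eps, 0 < eps -> exists N, forall n, (N <= n)%nat -> d (u n) l < eps.

Definition ball_d {V : Type} (d : V -> V -> R) (x : V) (r : R) : V -> Prop :=
  fun y => d x y <= r.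

Definition locally_d_finite {V : Type} (d : V -> V -> R) : Prop :=
  forall x r, exists l : list V, forall y, ball_d d x r y -> In y l.

Definition locally_finite_graph {V : Type} (E : V -> V -> Prop) : Prop :=
  (forall x y, E x y -> E y x) /\ (forall x, ~ E x x) /\
  (forall x, exists l : list V, forall y, E x y -> In y l).

Definition fin_supp {V : Type} (f : V -> R) : Prop :=
  exists l : list V, forall v, ~ In v l -> f v = 0.

Definition Lip1 {V : Type} (d : V -> V -> R) (f : V -> R) : Prop :=
  forall u v, Rabs (f u - f v) <= d u v.

Definition nabla {V : Type} (d : V -> V -> R) (x y : V) (f : V -> R) : R :=
  (f y - f x) / d x y.

Definition linear_on {V : Type} (Dom : (V -> R) -> Prop) (L : (V -> R) -> (V -> R)) : Prop :=
  Dom (fun _ => 0) /\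
  (forall f g, Dom f -> Dom g -> Dom (fun v => f v + g v)) /\
  (forall a f, Dom f -> Dom (fun v => a * f v)) /\
  (forall f g, Dom f -> Dom g -> forall x, L (fun v => f v + g v) x = L f x + L g x) /\
  (forall a f, Dom f -> forall x, L (fun v => a * f v) x = a * L f x).

Definition sup_bounded {V : Type} (L : (V -> R) -> (V -> R)) : Prop :=
  exists B, 0 < B /\
    forall f, fin_supp f -> forall M, (forall v, Rabs (f v) <= M) ->
      forall x, Rabs (L f x) <= B * M.

Definition ball_card_le {V : Type} (d : V -> V -> R) (x : V) (r C : R) : Prop :=
  exists l : list V, NoDup l /\ (forall y, In y l <-> ball_d d x r y) /\
    INR (length l) <= C.

Definition semi_local {V : Type} (d : V -> V -> R) (Dom : (V -> R) -> Prop)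
  (L : (V -> R) -> (V -> R)) : Prop :=
  exists Rr C2, 0 < Rr /\ 0 < C2 /\
    (forall x f, Dom f -> Lip1 d f -> (forall y, ball_d d x Rr y -> f y = 0) -> L f x = 0) /\
    (forall x, ball_card_le d x (2 * Rr) C2).

Definition rough_diff_op {V : Type} (Dom : (V -> R) -> Prop) (L : (V -> R) -> (V -> R)) : Prop :=
  Dom (fun _ => 1) /\ forall x, L (fun _ => 1) x = 0.

Definition ORic {V : Type} (d : V -> V -> R) (L : (V -> R) -> (V -> R)) (x y : V) : Rbar :=
  Glb_Rbar (fun r => exists f, fin_supp f /\ Lip1 d f /\ nabla d x y f = 1 /\
                               r = nabla d y x (L f)).

(* Main.v *)
Require Import Defs.
From Stdlib Require Import Reals List Lra.
From Coquelicot Require Import Coquelicot.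
Open Scope R_scope.

Lemma absle (a k : R) : Rabs a <= k -> -k <= a <= k.
Proof. intros H. pose proof (Rle_abs a). pose proof (Rle_abs (-a)).
  rewrite Rabs_Ropp in H1. lra. Qed.

Definition clamp (p q : R) := Rmax (-q) (Rmin p q).
Lemma clamp_lip p q p' q' k : Rabs (p - p') <= k -> Rabs (q - q') <= k ->
  Rabs (clamp p q - clamp p' q') <= k.
Proof.
  intros H1 H2. apply absle in H1. apply absle in H2.
  apply Rabs_le. unfold clamp, Rmax, Rmin.
  repeat destruct (Rle_dec _ _); lra.
Qed.

Lemma clamp_in p q : q >= 0 -> -q <= clamp p q <= q.
Proof. intros. unfold clamp, Rmax, Rmin. repeat destruct (Rle_dec _ _); lra. Qed.

Lemma clamp_id p q : Rabs p <= q -> clamp p q = p.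
Proof. intros H. apply absle in H. unfold clamp, Rmax, Rmin.
  repeat destruct (Rle_dec _ _); lra. Qed.

Lemma clamp_zero p q : q <= 0 -> clamp p q = -q \/ clamp p q = q.
Proof. intros. unfold clamp, Rmax, Rmin. repeat destruct (Rle_dec _ _); lra. Qed.

Section Main.
Variables (V : Type) (d : V -> V -> R) (Dom : (V -> R) -> Prop) (L : (V -> R) -> (V -> R)).
Hypotheses (Hm : is_metric d) (Hfin : locally_d_finite d) (Hlin : linear_on Dom L)
  (Hfs : forall f, fin_supp f -> Dom f) (Hrough : rough_diff_op Dom L).

Lemma key B Rr : 0 < Rr ->
  (forall f, fin_supp f -> forall M, (forall v, Rabs (f v) <= M) ->
      forall x, Rabs (L f x) <= B * M) ->
  (forall x f, Dom f -> Lip1 d f -> (forall y, ball_d d x Rr y -> f y = 0) -> L f x = 0) ->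
  forall z f, fin_supp f -> Lip1 d f -> Rabs (L f z) <= B * (2 * Rr).
Proof.
  intros HR HB Hloc z f Hf Hl.
  destruct Hm as (dpos & dzero & dsym & dtri).
  destruct Hlin as (D0 & Dadd & Dsc & Ladd & Lsc).
  destruct Hrough as (D1 & L1).
  set (phi := fun v => Rmax 0 (2 * Rr - d z v)).
  set (F := fun v => f v + (- f z) * 1).
  set (g := fun v => clamp (F v) (phi v)).
  set (h := fun v => F v + (-1) * g v).
  set (h2 := fun v => (/2) * h v).
  assert (DF : Dom F) by (apply Dadd; [apply Hfs; auto| apply Dsc; auto]).
  assert (LF : L F z = L f z).
  { unfold F. rewrite Ladd; auto. rewrite Lsc; auto. rewrite L1. ring. }
  assert (phig : forall v, phi v >= 0) by (intros; unfold phi; pose proof (Rmax_l 0 (2*Rr - d z v)); lra).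
  assert (gfs : fin_supp g).
  { destruct (Hfin z (2*Rr)) as [l Hl']. exists l. intros v Hv.
    destruct (Rle_dec (d z v) (2*Rr)) as [Hle|Hgt].
    - exfalso. apply Hv, Hl'. exact Hle.
    - unfold g. assert (phi v = 0).
      { unfold phi, Rmax. destruct (Rle_dec _ _); lra. }
      destruct (clamp_zero (F v) (phi v)) as [-> | ->]; lra. }
  assert (Dg : Dom g) by (apply Hfs; auto).
  assert (Dh : Dom h) by (apply Dadd; auto).
  assert (Dh2 : Dom h2) by (apply Dsc; auto).
  assert (Lh2 : L h2 z = 0).
  { apply Hloc; auto.
    - intros u v. unfold h2, h, g, F.
      assert (Hc : Rabs (clamp (f u + - f z * 1) (phi u) - clamp (f v + - f z * 1) (phi v)) <= d u v).
      { apply clamp_lip.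
        - replace (f u + - f z * 1 - (f v + - f z * 1)) with (f u - f v) by ring. apply Hl.
        - apply Rabs_le. unfold phi, Rmax.
          pose proof (dtri z u v). pose proof (dtri z v u). rewrite (dsym v u) in H0.
          repeat destruct (Rle_dec _ _); lra. }
      apply absle in Hc. pose proof (Hl u v) as Hl2. apply absle in Hl2.
      apply Rabs_le. lra.
    - intros v Hv. unfold ball_d in Hv. unfold h2, h, g.
      rewrite clamp_id. ring.
      unfold F. replace (f v + - f z * 1) with (f v - f z) by ring.
      eapply Rle_trans. apply Hl. rewrite dsym.
      unfold phi. eapply Rle_trans; [|apply Rmax_r]. lra. }
  assert (Lh : L h z = 0).
  { unfold h2 in Lh2. rewrite Lsc in Lh2; auto. lra. }
  assert (LFg : L F z = L g z).
  { unfold h in Lh. rewrite Ladd in Lh; auto. rewrite Lsc in Lh; auto. lra. }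
  rewrite <- LF, LFg. apply HB; auto.
  intros v. apply Rabs_le. unfold g.
  pose proof (clamp_in (F v) (phi v) (phig v)).
  assert (phi v <= 2 * Rr).
  { unfold phi, Rmax. pose proof (dpos z v). destruct (Rle_dec _ _); lra. }
  lra.
Qed.
End Main.

Theorem mainTheorem15 (V : Type) (E : V -> V -> Prop) (d : V -> V -> R)
  (Dom : (V -> R) -> Prop) (L : (V -> R) -> (V -> R)) :
  is_metric d -> metric_complete d -> locally_finite_graph E ->
  locally_d_finite d ->
  linear_on Dom L ->
  (forall f, fin_supp f -> Dom f) ->
  sup_bounded L -> semi_local d Dom L -> rough_diff_op Dom L ->
  forall x y : V, x <> y -> is_finite (ORic d L x y).
Proof.
  intros Hm _ _ Hfin Hlin Hfs [B [HB0 HB]] [Rr [C2 [HR [_ [Hloc _]]]]] Hrough x y Hxy.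
  pose proof (key V d Dom L Hm Hfin Hlin Hfs Hrough B Rr HR HB Hloc) as K.
  destruct Hm as (dpos & dzero & dsym & dtri).
  assert (dxy : 0 < d x y).
  { destruct (dpos x y) as [?|H0]; auto. exfalso. apply Hxy, dzero. auto. }
  set (f0 := fun v => Rmax 0 (d x y - d y v)).
  assert (f0fs : fin_supp f0).
  { destruct (Hfin y (d x y)) as [l Hl]. exists l. intros v Hv.
    unfold f0, Rmax. destruct (Rle_dec _ _) as [H1|H1]; auto.
    exfalso. apply Hv, Hl. unfold ball_d. lra. }
  assert (f0l : Lip1 d f0).
  { intros u v. unfold f0. apply Rabs_le.
    pose proof (dtri y u v). pose proof (dtri y v u). rewrite (dsym v u) in H0.
    unfold Rmax. repeat destruct (Rle_dec _ _); lra. }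
  assert (f0n : nabla d x y f0 = 1).
  { unfold nabla, f0. rewrite (dsym y x).
    assert (d y y = 0) by (apply dzero; auto). rewrite H.
    unfold Rmax. repeat destruct (Rle_dec _ _); try lra.
    field. lra. }
  set (S := fun r => exists f, fin_supp f /\ Lip1 d f /\ nabla d x y f = 1 /\
                               r = nabla d y x (L f)).
  assert (S0 : S (nabla d y x (L f0))) by (exists f0; auto).
  assert (Slb : forall r, S r -> - (2 * (B * (2 * Rr))) / d x y <= r).
  { intros r [f [Hf [Hl [_ ->]]]]. unfold nabla. rewrite (dsym y x).
    pose proof (absle _ _ (K x f Hf Hl)). pose proof (absle _ _ (K y f Hf Hl)).
    unfold Rdiv. apply Rmult_le_compat_r. left; apply Rinv_0_lt_compat; auto. lra. }
  unfold ORic. fold S.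
  destruct (Glb_Rbar_correct S) as [Hlb Hgl].
  destruct (Glb_Rbar S) as [l| |] eqn:Eq.
  - reflexivity.
  - exfalso. specialize (Hlb _ S0). simpl in Hlb. auto.
  - exfalso. assert (Hg := Hgl (Finite (- (2 * (B * (2 * Rr))) / d x y))).
    simpl in Hg. apply Hg. intros r Hr. simpl. apply Slb; auto.
Qed.
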